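(* Let $(X,d,\kappa)$ be a digital metric space with $1<|X|<\infty$, and let $T:X\to X$ be a weakly uniformly strict digital contraction. Then $T$ is neither one-to-one nor onto.
   Context: A digital metric space is a triple $(X,d,\kappa)$ where $X\subset\mathbb{Z}^n$ for some positive integer $n$, $\kappa$ is an adjacency relation on $X$, and $d$ is a metric on $X$. $T:X\to X$ is a weakly uniformly strict digital contraction if for every $\varepsilon>0$ there exists $\delta>0$ such that for all $x,y\in X$, $\varepsilon\le d(x,y)<\varepsilon+\delta$ implies $d(T(x),T(y))<\varepsilon$. *)

(* Defs.v *)
(* points of Z^n are row vectors 'rV[int]_n, a finite digital
   image X is a finite set {fset 'rV[int]_n} (finmap), metric values in a realType. *)
From HB Require Import structures.
From mathcomp Require Import all_boot all_order all_algebra.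
From mathcomp Require Import finmap.
From mathcomp Require Import reals.
Set Implicit Arguments. Unset Strict Implicit. Unset Printing Implicit Defensive.
Import Order.TTheory GRing.Theory Num.Theory.
Local Open Scope ring_scope.

Definition is_metric (R : realType) (P : Type) (d : P -> P -> R) : Prop :=
  (forall x y, 0 <= d x y) /\
  (forall x y, d x y = 0 <-> x = y) /\
  (forall x y, d x y = d y x) /\
  (forall x y z, d x z <= d x y + d y z).

Definition wus_digital_contraction (R : realType) (P : Type)
    (d : P -> P -> R) (T : P -> P) : Prop :=
  forall eps : R, 0 < eps ->
    exists delta : R, 0 < delta /\
      forall x y : P, eps <= d x y -> d x y < eps + delta -> d (T x) (T y) < eps.

(* Main.v *)
Require Import Defs.
From HB Require Import structures.
From mathcomp Require Import all_boot all_order all_algebra.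
From mathcomp Require Import finmap.
From mathcomp Require Import reals.
Import Order.TTheory GRing.Theory Num.Theory.
Local Open Scope ring_scope.
Local Open Scope fset_scope.

Theorem proposition8p4 (R : realType) (n : nat) (X : {fset 'rV[int]_n})
    (kappa : X -> X -> bool) (d : X -> X -> R) (T : X -> X) :
  (0 < n)%N ->
  is_metric d ->
  (1 < #|` X|)%N ->
  wus_digital_contraction d T ->
  ~ injective T /\ ~ (forall y : X, exists x : X, T x = y).
Proof.
move=> _ [d0 [dE [dC dT]]] cX wus.
have strict : forall x y : X, x != y -> d (T x) (T y) < d x y.
  move=> x y xy.
  have dpos : 0 < d x y.
    rewrite lt_def d0 andbT; apply/negP => /eqP /dE /eqP; exact/negP.
  have [del [delp H]] := wus _ dpos.
  apply: H => //; by rewrite ltrDl.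
rewrite cardfE in cX.
have [x0 [y0 [_ _ xy0]]] := card_gt1P cX.
have noinj : ~ injective T.
  move=> Tinj.
  pose P := fun p : X * X => p.1 != p.2.
  have P0 : P (x0, y0) by [].
  case: (@arg_minP _ R _ (x0, y0) P (fun p => d p.1 p.2) P0) => [[a b]] /= ab Hmin.
  have Tab : T a != T b by apply: contra ab => /eqP /Tinj ->.
  have := Hmin (T a, T b) Tab; rewrite /= leNgt => /negP; apply.
  exact: strict.
split => // surj; apply: noinj.
have [g Hg] : exists g : X -> X, forall y, T (g y) = y.
  have surj' : forall y, exists x, T x == y.
    by move=> y; have [x Hx] := surj y; exists x; apply/eqP.
  exists (fun y => xchoose (surj' y)) => y; exact/eqP/(xchooseP (surj' y)).
have ginj : injective g by move=> a b /(congr1 T); rewrite !Hg.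
have gsurj : forall x, exists y, g y = x.
  move=> x.
  have : x \in codom g by rewrite (inj_card_onto ginj) // => z; rewrite inE.
  by move/codomP => [y ->]; exists y.
move=> a b.
have [a' <-] := gsurj a; have [b' <-] := gsurj b.
by rewrite !Hg => ->.
Qed.
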